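(* In Zhu's algebra $A(M(1)^+)$ (writing $\omega$, $J$ for $[\omega]$, $[J]$ and products for $*$), $$(\omega-1)\Bigl(\omega-\frac1{16}\Bigr)\Bigl(\omega-\frac9{16}\Bigr)(J+\omega-4\omega^2)=0.$$
   Context: Let $\mathfrak h=\mathbb C h$ with $\langle h,h\rangle=1$, Heisenberg algebra $[h(m),h(n)]=m\delta_{m+n,0}$. Let $M(1)=\mathbb C[h(-1),h(-2),\dots]\mathbf 1$ be the Heisenberg vertex operator algebra of central charge 1 (vacuum $\mathbf 1$, $Y(h(-1)\mathbf 1,z)=\sum_nh(n)z^{-n-1}$, vertex operators of monomials given by normally ordered products of derivatives of $h(z)$), with conformal vector $\omega=\frac12h(-1)^2\mathbf 1$. Let $\theta$ be the automorphism acting by $(-1)^k$ on monomials $h(-n_1)\cdots h(-n_k)\mathbf 1$ and $M(1)^+$ its fixed-point vertex operator subalgebra. Let $J=h(-1)^4\mathbf 1-2h(-3)h(-1)\mathbf 1+\frac32h(-2)^2\mathbf 1$. Zhu's algebra: for a vertex operator algebra $V$, homogeneous $u$ and $v\in V$ with $Y(u,z)=\sum u_nz^{-n-1}$, set $u*v=\sum_{i\ge0}\binom{\mathrm{wt}(u)}{i}u_{i-1}v$ and $u\circ v=\sum_{i\ge0}\binom{\mathrm{wt}(u)}{i}u_{i-2}v$; $O(V)$ is the span of all $u\circ v$, and $A(V)=V/O(V)$ is an associative algebra (with unit $[\mathbf 1]$) under the product induced by $*$; $[v]=v+O(V)$. *)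

(* Defs.v *)
From HB Require Import structures.
From mathcomp Require Import all_boot all_order all_algebra.
From mathcomp Require Import complex.
From mathcomp Require Import Rstruct.
From Stdlib Require Import Rdefinitions.
Set Implicit Arguments. Unset Strict Implicit. Unset Printing Implicit Defensive.
Import Order.TTheory GRing.Theory Num.Theory.
Local Open Scope ring_scope.

Definition CC : fieldType := complex Rdefinitions.R.

Section Heisenberg.
Variable F : fieldType.

(* A monomial h(-k1-1) h(-k2-1) ... h(-kr-1) 1 is encoded by the list
   [:: k1; ...; kr] (order irrelevant: monomials are compared up to
   permutation).  The entry k stands for the creation operator h(-(k+1)). *)
Definition monom := seq nat.
Definition vec := seq (F * monom).

Definition wtm (mu : monom) : nat := sumn (map S mu).

Definition coef (v : vec) (mu : monom) : F :=
  \sum_(p <- v | perm_eq p.2 mu) p.1.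
Definition veq (v w : vec) : Prop := forall mu, coef v mu = coef w mu.

Definition vscale (c : F) (v : vec) : vec := [seq (c * p.1, p.2) | p <- v].
Definition vadd (v w : vec) : vec := v ++ w.
Definition vsub (v w : vec) : vec := v ++ vscale (-1) w.
Definition vsum (s : seq vec) : vec := flatten s.
Definition lin (f : monom -> vec) (v : vec) : vec :=
  flatten [seq vscale p.1 (f p.2) | p <- v].

(* Heisenberg modes h(j) on monomials: [h(m),h(n)] = m delta_{m+n,0},
   h(0) = 0 on M(1), h(j) (j>0) = j d/dh(-j), h(j) (j<0) = multiplication. *)
Definition hmono (j : int) (mu : monom) : vec :=
  match j with
  | Posz 0 => [::]
  | Posz k.+1 =>
      if k \in mu then [:: ((k.+1)%:R * (count_mem k mu)%:R, rem k mu)] else [::]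
  | Negz k => [:: (1, k :: mu)]
  end.
Definition hmode (j : int) (v : vec) : vec := lin (hmono j) v.

Definition gbin (a : int) (k : nat) : F :=
  (\prod_(i < k) (a%:~R - i%:R)) / (k`!)%:R.

(* Modes u_n of Y(u,z) = sum_n u_n z^{-n-1} for a monomial u:
   Y(1,z) = id, and Y(h(-m) w, z) = : (d^{m-1}/(m-1)!) h(z) Y(w,z) : ,
   whose z^{-n-1} coefficient is
     sum_j binom(-j-1, m-1) ( h(j) w_{n-j-m}   if j < 0
                              w_{n-j-m} h(j)   if j >= 0 ).
   Acting on a monomial nu only |j| <= B := wt u + wt nu + |n| + 1
   can contribute, so the sum is truncated there. *)
Fixpoint ymono (mu : monom) (n : int) (nu : monom) {struct mu} : vec :=
  match mu with
  | [::] => if n == -1 then [:: (1, nu)] else [::]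
  | k :: mu' =>
      let B := (wtm mu + wtm nu + absz n + 1)%N in
      flatten [seq let j := (t%:Z - B%:Z) in
                   vscale (gbin (- j - 1) k)
                     (if j < 0 then hmode j (ymono mu' (n - j - (k.+1)%:Z) nu)
                      else lin (ymono mu' (n - j - (k.+1)%:Z)) (hmono j nu))
              | t <- iota 0 (2 * B + 1)]
  end.

Definition ymode (u : vec) (n : int) (v : vec) : vec :=
  lin (fun mu => lin (ymono mu n) v) u.

(* Zhu's products, extended linearly from homogeneous u (each monomial is
   homogeneous of weight wtm) :
   u * v = sum_i binom(wt u, i) u_{i-1} v,  u o v = sum_i binom(wt u,i) u_{i-2} v *)
Definition zstar (u v : vec) : vec :=
  lin (fun mu => vsum [seq vscale ('C(wtm mu, i))%:R (lin (ymono mu (i%:Z - 1)) v)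
                      | i <- iota 0 (wtm mu).+1]) u.
Definition zcirc (u v : vec) : vec :=
  lin (fun mu => vsum [seq vscale ('C(wtm mu, i))%:R (lin (ymono mu (i%:Z - 2)) v)
                      | i <- iota 0 (wtm mu).+1]) u.

(* membership in M(1)^+ (theta-fixed: only even-length monomials) *)
Definition in_plus (v : vec) : Prop := forall p, p \in v -> ~~ odd (size p.2).
Definition homog (v : vec) : Prop := exists d, forall p, p \in v -> wtm p.2 = d.

Definition inO_plus (x : vec) : Prop :=
  exists s : seq (vec * vec),
    (forall p, p \in s -> [/\ homog p.1, in_plus p.1 & in_plus p.2]) /\
    veq x (vsum [seq zcirc p.1 p.2 | p <- s]).

Definition vac : vec := [:: (1, [::])].
Definition omega : vec := [:: (1 / 2%:R, [:: 0%N; 0%N])].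
Definition Jvec : vec :=
  [:: (1, [:: 0%N; 0%N; 0%N; 0%N]); (- 2%:R, [:: 2%N; 0%N]); (3%:R / 2%:R, [:: 1%N; 1%N])].

End Heisenberg.

(* Main.v *)
Require Import Defs.
From HB Require Import structures.
From mathcomp Require Import all_boot all_order all_algebra zify.
From mathcomp Require Import complex Rstruct.
From Stdlib Require Rdefinitions Raxioms RIneq QArith Qcanon Qreals ZArith.
From Corelib Require BinNums.
Notation positive := BinNums.positive.
Notation xH := BinNums.xH.
Notation xO := BinNums.xO.
Notation xI := BinNums.xI.
Set Implicit Arguments. Unset Strict Implicit. Unset Printing Implicit Defensive.
Import Order.TTheory GRing.Theory Num.Theory.
Local Open Scope ring_scope.

Section A.
Variable F : fieldType.

Definition gbin2 (a : int) (k : nat) : F :=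
  (foldr (fun i acc => (a%:~R - i%:R) * acc) 1 (iota 0 k)) / (k`!)%:R.

Definition yterm (rec : int -> monom -> vec F) (k : nat) (n : int) (nu : monom) (j : int) : vec F :=
  vscale (gbin2 (- j - 1) k)
    (if j < 0 then hmode j (rec (n - j - (k.+1)%:Z) nu)
     else lin (rec (n - j - (k.+1)%:Z)) (hmono F j nu)).

Fixpoint ymono2 (mu : monom) (n : int) (nu : monom) {struct mu} : vec F :=
  match mu with
  | [::] => if n == -1 then [:: (1, nu)] else [::]
  | k :: mu' =>
      let B := (wtm mu + wtm nu + absz n + 1)%N in
      flatten [seq yterm (ymono2 mu') k n nu (t%:Z - B%:Z)
              | t <- [seq t <- iota 0 (2 * B + 1) |
                      (n - (wtm mu)%:Z - (wtm nu)%:Z < t%:Z - B%:Z) && (t%:Z - B%:Z <= (wtm nu)%:Z)]]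
  end.

Lemma gbinE a k : gbin F a k = gbin2 a k.
Proof.
rewrite /gbin /gbin2; congr (_ / _).
rewrite -(big_mkord xpredT (fun i => a%:~R - i%:R)) /index_iota subn0.
elim: (iota 0 k) => [|x s IH]; first by rewrite big_nil.
by rewrite big_cons IH.
Qed.

Lemma mem_wtm (k : nat) (nu : monom) : k \in nu -> (k < wtm nu)%N.
Proof.
elim: nu => [|x s IH] //=; rewrite inE /wtm /= => /orP [/eqP->|/IH]; first by rewrite ltnS leq_addr.
move=> H; apply: leq_trans H _; rewrite leq_addl //.
Qed.

Lemma wtm_rem (k : nat) (nu : monom) : k \in nu -> wtm nu = (k.+1 + wtm (rem k nu))%N.
Proof.
elim: nu => [|x s IH] //=; rewrite inE => /orP [/eqP->|H]; first by rewrite eqxx.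
case: eqP => [->//|_]; rewrite /wtm /= -/(wtm s) -/(wtm (rem k s)) (IH H); lia.
Qed.

Lemma flatten_nil (T : Type) (f : nat -> seq T) s :
  (forall t, t \in s -> f t = [::]) -> flatten [seq f t | t <- s] = [::].
Proof.
elim: s => [|x s IH] //= H; rewrite H ?mem_head // IH // => t ts; apply: H; by rewrite inE ts orbT.
Qed.

Lemma flatten_filter (T : Type) (f : nat -> seq T) (P : pred nat) s :
  (forall t, t \in s -> ~~ P t -> f t = [::]) ->
  flatten [seq f t | t <- [seq t <- s | P t]] = flatten [seq f t | t <- s].
Proof.
elim: s => [|x s IH] //= H; case: ifP => Px /=.
  by rewrite IH // => t ts; apply: H; by rewrite inE ts orbT.
by rewrite (H x) ?mem_head ?Px // IH // => t ts; apply: H; by rewrite inE ts orbT.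
Qed.

Lemma yterm_nil (rec : int -> monom -> vec F) k mu' n nu j :
  (forall n' nu', ((wtm mu')%:Z + (wtm nu')%:Z <= n') -> rec n' nu' = [::]) ->
  [\/ (wtm mu')%:Z + (wtm nu)%:Z + (k.+1)%:Z + j <= n,
      (0 <= j) && ((wtm mu')%:Z + (wtm nu)%:Z + (k.+1)%:Z <= n) |
      (wtm nu)%:Z < j] ->
  yterm rec k n nu j = [::].
Proof.
move=> V H; rewrite /yterm.
case: ifP => jneg.
  rewrite V //; case: H => [H|/andP[H _]|H]; lia.
have hm : hmono F j nu = [::] \/ exists k', [/\ j = (k'.+1)%:Z, k' \in nu & hmono F j nu = [:: ((k'.+1)%:R * (count_mem k' nu)%:R, rem k' nu)]].
  case: j jneg {H} => [[|k'] |m] //= _; first by left.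
  by case: ifP => kin; [right; exists k' | left].
case: hm => [->//|[k' [jE kin ->]]] /=.
rewrite /lin /= V //.
have := wtm_rem kin; have := mem_wtm kin.
case: H => [H|/andP[H1 H2]|H]; lia.
Qed.

Lemma V1 mu : forall n nu, (wtm mu)%:Z + (wtm nu)%:Z <= n -> ymono2 mu n nu = [::].
Proof.
elim: mu => [|k mu IH] n nu H.
  by rewrite /=; case: eqP => // E; rewrite E in H; lia.
apply: flatten_nil => t.
rewrite mem_filter => /andP [/andP [H1 H2] _].
apply: yterm_nil; first exact: IH.
apply: Or32; apply/andP; split.
  move: H H1; rewrite /wtm /=; lia.
move: H; rewrite /wtm /=; lia.
Qed.

Lemma ymono_cons k mu n nu : ymono F (k :: mu) n nu =
      flatten [seq let j := (t%:Z - (wtm (k :: mu) + wtm nu + absz n + 1)%N%:Z) in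
                   vscale (gbin F (- j - 1) k)
                     (if j < 0 then hmode j (ymono F mu (n - j - (k.+1)%:Z) nu)
                      else lin (ymono F mu (n - j - (k.+1)%:Z)) (hmono F j nu))
              | t <- iota 0 (2 * (wtm (k :: mu) + wtm nu + absz n + 1)%N + 1)].
Proof. by []. Qed.

Lemma ymono2_cons k mu n nu : ymono2 (k :: mu) n nu =
      flatten [seq yterm (ymono2 mu) k n nu (t%:Z - (wtm (k :: mu) + wtm nu + absz n + 1)%N%:Z)
              | t <- [seq t <- iota 0 (2 * (wtm (k :: mu) + wtm nu + absz n + 1)%N + 1) |
                      (n - (wtm (k :: mu))%:Z - (wtm nu)%:Z < t%:Z - (wtm (k :: mu) + wtm nu + absz n + 1)%N%:Z)
                       && (t%:Z - (wtm (k :: mu) + wtm nu + absz n + 1)%N%:Z <= (wtm nu)%:Z)]].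
Proof. by []. Qed.

Lemma ymonoE mu : forall n nu, ymono F mu n nu = ymono2 mu n nu.
Proof.
elim: mu => [|k mu IH] n nu; first by [].
rewrite ymono_cons ymono2_cons flatten_filter; last first.
  move=> t _ /nandP H; apply: yterm_nil; first exact: V1.
  case: H => H; [apply: Or31 | apply: Or33]; move: H; rewrite /wtm /= ; lia.
congr flatten; apply: eq_map => t; rewrite /yterm gbinE.
case: ifP => _; first by rewrite IH.
congr vscale; rewrite /lin; congr flatten; apply: eq_map => p; by rewrite IH.
Qed.
End A.


Section B.
Variable F : fieldType.

Definition zstar2 (u v : vec F) : vec F :=
  lin (fun mu => vsum [seq vscale ('C(wtm mu, i))%:R (lin (ymono2 F mu (i%:Z - 1)) v)
                      | i <- iota 0 (wtm mu).+1]) u.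
Definition zcirc2 (u v : vec F) : vec F :=
  lin (fun mu => vsum [seq vscale ('C(wtm mu, i))%:R (lin (ymono2 F mu (i%:Z - 2)) v)
                      | i <- iota 0 (wtm mu).+1]) u.

Fixpoint ins (p : F * monom) (acc : vec F) : vec F :=
  match acc with
  | [::] => [:: p]
  | q :: r => if q.2 == p.2 then (q.1 + p.1, q.2) :: r else q :: ins p r
  end.
Definition nfs (v : vec F) : vec F := foldr ins [::] v.
Definition nf (v : vec F) : vec F := nfs [seq (p.1, sort leq p.2) | p <- v].
Definition allzero (v : vec F) : bool := all (fun p => p.1 == 0) v.

Fixpoint pos2F (p : positive) : F :=
  match p with xH => 1 | xO q => 2%:R * pos2F q | xI q => 2%:R * pos2F q + 1 end.
Definition q2F (s : bool) (a b : positive) : F := (-1) ^+ s * pos2F a / pos2F b.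

Lemma eq_lin (f g : monom -> vec F) v : (forall m, f m = g m) -> lin f v = lin g v.
Proof. by move=> H; rewrite /lin; congr flatten; apply: eq_map => p; rewrite H. Qed.

Lemma zstarE u v : zstar u v = zstar2 u v.
Proof.
apply: eq_lin => m; congr flatten; apply: eq_map => i; congr vscale.
by apply: eq_lin => m'; rewrite ymonoE.
Qed.
Lemma zcircE u v : zcirc u v = zcirc2 u v.
Proof.
apply: eq_lin => m; congr flatten; apply: eq_map => i; congr vscale.
by apply: eq_lin => m'; rewrite ymonoE.
Qed.

Definition wsum (v : vec F) (g : monom -> F) : F := \sum_(p <- v) p.1 * g p.2.

Lemma coef_wsum (v : vec F) mu : coef v mu = wsum v (fun m => (perm_eq m mu)%:R).
Proof.
rewrite /coef /wsum big_mkcond; apply: eq_bigr => p _.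
by case: ifP => _; rewrite ?mulr1 ?mulr0.
Qed.

Lemma wsum_cat v w g : wsum (v ++ w) g = wsum v g + wsum w g.
Proof. by rewrite /wsum big_cat. Qed.

Lemma wsum_scale c v g : wsum (vscale c v) g = c * wsum v g.
Proof.
rewrite /wsum /vscale big_map mulr_sumr; apply: eq_bigr => p _ /=; by rewrite mulrA.
Qed.

Lemma wsum_flatten ss g : wsum (flatten ss) g = \sum_(s <- ss) wsum s g.
Proof.
elim: ss => [|s ss IH]; first by rewrite /wsum !big_nil.
by rewrite /= wsum_cat IH big_cons.
Qed.

Lemma wsum_lin f v g : wsum (lin f v) g = wsum v (fun m => wsum (f m) g).
Proof.
rewrite /lin wsum_flatten big_map /wsum; apply: eq_bigr => p _.
by rewrite -/(wsum _ _) wsum_scale.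
Qed.

Lemma wsum_ins p acc g : wsum (ins p acc) g = p.1 * g p.2 + wsum acc g.
Proof.
elim: acc => [|q r IH] /=; first by rewrite /wsum big_cons big_nil.
case: eqP => E.
  rewrite /wsum !big_cons /= E mulrDl addrA; congr (_ + _); by rewrite addrC.
by rewrite /wsum !big_cons -!/(wsum _ _) IH addrCA.
Qed.

Lemma wsum_nfs v g : wsum (nfs v) g = wsum v g.
Proof.
elim: v => [|p v IH] //=; by rewrite wsum_ins IH /wsum big_cons.
Qed.

Lemma wsum_nf v g : wsum (nf v) g = wsum v (fun m => g (sort leq m)).
Proof. by rewrite /nf wsum_nfs /wsum big_map. Qed.

Lemma wsum_allzero v g : allzero v -> wsum v g = 0.
Proof.
move=> H; rewrite /wsum big_seq big1 // => p pv.
by move: H => /allP /(_ p pv) /eqP ->; rewrite mul0r.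
Qed.

Lemma coef_vsub (v w : vec F) mu : coef (vsub v w) mu = coef v mu - coef w mu.
Proof.
rewrite !coef_wsum /vsub wsum_cat wsum_scale; by rewrite mulN1r.
Qed.

Lemma allzero_veq (v w : vec F) : allzero (nf (vsub v w)) -> veq v w.
Proof.
move=> H mu; apply/eqP; rewrite -subr_eq0 -coef_vsub coef_wsum.
rewrite -(wsum_allzero (fun m => (perm_eq m mu)%:R) H) wsum_nf.
apply/eqP; apply: eq_bigr => p _; congr (_ * _%:R).
by rewrite perm_sort.
Qed.

Definition wequiv (v w : vec F) := forall g, wsum v g = wsum w g.

Lemma wequiv_nfs v : wequiv (nfs v) v.
Proof. move=> g; exact: wsum_nfs. Qed.

Lemma wsum_zstar2 u v g :
  wsum (zstar2 u v) g =
  wsum u (fun m => \sum_(i <- iota 0 (wtm m).+1) ('C(wtm m, i))%:R *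
                    wsum v (fun m' => wsum (ymono2 F m (i%:Z - 1) m') g)).
Proof.
rewrite /zstar2 wsum_lin; apply: eq_bigr => p _; congr (_ * _).
rewrite /vsum wsum_flatten big_map; apply: eq_bigr => i _.
by rewrite wsum_scale wsum_lin.
Qed.

Lemma zstar2_wequiv u u' v v' : wequiv u u' -> wequiv v v' ->
  wequiv (zstar2 u v) (zstar2 u' v').
Proof.
move=> Hu Hv g; rewrite !wsum_zstar2 Hu.
apply: eq_bigr => p _; congr (_ * _); apply: eq_bigr => i _; by rewrite Hv.
Qed.

Lemma wequiv_veq (v w : vec F) : wequiv v w -> veq v w.
Proof. by move=> H mu; rewrite !coef_wsum H. Qed.
End B.


Section C.
Variables (K L : fieldType) (f : {rmorphism K -> L}).

Definition mapv (v : vec K) : vec L := [seq (f p.1, p.2) | p <- v].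

Lemma mapv_cat v w : mapv (v ++ w) = mapv v ++ mapv w.
Proof. exact: map_cat. Qed.
Lemma mapv_flatten ss : mapv (flatten ss) = flatten (map mapv ss).
Proof. exact: map_flatten. Qed.
Lemma mapv_vscale c v : mapv (vscale c v) = vscale (f c) (mapv v).
Proof. rewrite /mapv /vscale -!map_comp; apply: eq_map => p /=; by rewrite rmorphM. Qed.
Lemma mapv_lin (g1 : monom -> vec K) (g2 : monom -> vec L) v :
  (forall m, mapv (g1 m) = g2 m) -> mapv (lin g1 v) = lin g2 (mapv v).
Proof.
move=> H; rewrite /lin mapv_flatten -!map_comp; congr flatten; apply: eq_map => p /=.
by rewrite mapv_vscale H.
Qed.
Lemma mapv_vsum ss : mapv (vsum ss) = vsum (map mapv ss).
Proof. exact: mapv_flatten. Qed.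
Lemma mapv_vsub v w : mapv (vsub v w) = vsub (mapv v) (mapv w).
Proof. by rewrite /vsub mapv_cat mapv_vscale rmorphN1. Qed.
Lemma mapv_vadd v w : mapv (vadd v w) = vadd (mapv v) (mapv w).
Proof. exact: mapv_cat. Qed.

Lemma mapv_hmono j mu : mapv (hmono K j mu) = hmono L j mu.
Proof.
case: j => [[|k]|k] //=; last by rewrite rmorph1.
by case: ifP => _ //=; rewrite rmorphM !rmorph_nat.
Qed.
Lemma mapv_hmode j v : mapv (hmode j v) = hmode j (mapv v).
Proof. apply: mapv_lin => m; exact: mapv_hmono. Qed.

Lemma f_gbin2 a k : f (gbin2 K a k) = gbin2 L a k.
Proof.
rewrite /gbin2 fmorph_div rmorph_nat; congr (_ / _).
elim: (iota 0 k) => [|x s IH] /=; first exact: rmorph1.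
by rewrite rmorphM rmorphB rmorph_int rmorph_nat IH.
Qed.

Lemma mapv_ymono2 mu : forall n nu, mapv (ymono2 K mu n nu) = ymono2 L mu n nu.
Proof.
elim: mu => [|k mu IH] n nu.
  by rewrite /=; case: ifP => //= _; rewrite rmorph1.
rewrite !ymono2_cons mapv_flatten -map_comp; congr flatten; apply: eq_map => t /=.
rewrite /yterm mapv_vscale f_gbin2; congr vscale.
case: ifP => _; first by rewrite mapv_hmode IH.
by rewrite (mapv_lin _ (fun m => IH _ m)) mapv_hmono.
Qed.

Lemma mapv_zstar2 u v : mapv (zstar2 u v) = zstar2 (mapv u) (mapv v).
Proof.
apply: mapv_lin => m; rewrite mapv_vsum -map_comp; congr flatten; apply: eq_map => i /=.
rewrite mapv_vscale rmorph_nat; congr vscale; apply: mapv_lin => m'; exact: mapv_ymono2.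
Qed.
Lemma mapv_zcirc2 u v : mapv (zcirc2 u v) = zcirc2 (mapv u) (mapv v).
Proof.
apply: mapv_lin => m; rewrite mapv_vsum -map_comp; congr flatten; apply: eq_map => i /=.
rewrite mapv_vscale rmorph_nat; congr vscale; apply: mapv_lin => m'; exact: mapv_ymono2.
Qed.

Lemma coef_mapv v mu : coef (mapv v) mu = f (coef v mu).
Proof. by rewrite /coef big_map rmorph_sum. Qed.

Lemma veq_mapv v w : veq v w -> veq (mapv v) (mapv w).
Proof. by move=> H mu; rewrite !coef_mapv H. Qed.

Lemma mapv_vac : mapv (vac K) = vac L.
Proof. by rewrite /mapv /= rmorph1. Qed.
Lemma mapv_omega : mapv (omega K) = omega L.
Proof. by rewrite /mapv /= fmorph_div rmorph1 rmorph_nat. Qed.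
Lemma mapv_Jvec : mapv (Jvec K) = Jvec L.
Proof. by rewrite /mapv /= rmorph1 fmorph_div rmorphN !rmorph_nat. Qed.

Lemma f_pos2F p : f (pos2F K p) = pos2F L p.
Proof. elim: p => [p IH|p IH|] /=; by rewrite ?rmorphD ?rmorphM ?rmorph_nat ?IH ?rmorph1. Qed.
Lemma f_q2F s a b : f (q2F K s a b) = q2F L s a b.
Proof. by rewrite /q2F fmorph_div rmorphM rmorphXn rmorphN1 !f_pos2F. Qed.
End C.


Module QcPart.
Import GRing.Theory.
Import Stdlib.QArith.QArith Stdlib.QArith.Qcanon Stdlib.ZArith.ZArith Stdlib.Reals.Qreals Stdlib.Reals.RIneq Stdlib.Reals.Raxioms Stdlib.Reals.Rdefinitions.
Local Close Scope ring_scope.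

Definition Qc_eqb (x y : Qc) : bool := Qeq_bool (this x) (this y).
Lemma Qc_eqP : Equality.axiom Qc_eqb.
Proof.
move=> x y; rewrite /Qc_eqb; apply: (iffP idP) => [/Qeq_bool_iff H|->].
  exact: Qc_is_canon.
by apply/Qeq_bool_iff; apply: Qeq_refl.
Qed.
HB.instance Definition _ := hasDecEq.Build Qc Qc_eqP.

Definition z2i (z : Z) : int := match z with Z0 => Posz 0 | Zpos p => Posz (Pos.to_nat p) | Zneg p => Negz (Pos.to_nat p).-1 end.
Definition i2z (i : int) : Z := match i with Posz n => Z.of_nat n | Negz n => Z.neg (Pos.of_succ_nat n) end.
Lemma z2iK : cancel z2i i2z.
Proof.
case=> //= p; first by rewrite positive_nat_Z.
have [n Hn] := Pos2Nat.is_succ p. rewrite Hn /=. congr Zneg.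
by apply: Pos2Nat.inj; rewrite SuccNat2Pos.id_succ Hn.
Qed.
Definition qenc (q : Qc) : int * nat := (z2i (Qnum q), Pos.to_nat (Qden q)).
Definition qdec (p : int * nat) : option Qc := Some (Q2Qc (Qmake (i2z p.1) (Pos.of_nat p.2))).
Lemma qencK : pcancel qenc qdec.
Proof.
move=> q; rewrite /qdec /qenc /= z2iK Pos2Nat.id; congr Some.
apply: Qc_is_canon. exact: (Qred_correct (Qnum q # Qden q)).
Qed.
HB.instance Definition _ := PCanIsCountable qencK.

Lemma Qc_addNr : left_inverse 0%Qc Qcopp Qcplus.
Proof. by move=> x; rewrite Qcplus_comm Qcplus_opp_r. Qed.
HB.instance Definition _ := GRing.isZmodule.Build Qc Qcplus_assoc Qcplus_comm Qcplus_0_l Qc_addNr.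
Lemma Qc_1n0 : (1%Qc : Qc) != 0%Qc. Proof. by []. Qed.
HB.instance Definition _ := GRing.Zmodule_isComNzRing.Build Qc Qcmult_assoc Qcmult_comm Qcmult_1_l Qcmult_plus_distr_l Qc_1n0.
Lemma Qc_mulVf (x : Qc) : x != 0%Qc -> (Qcinv x * x)%Qc = 1%Qc.
Proof. move=> /eqP nx; rewrite Qcmult_comm; exact: Qcmult_inv_r. Qed.
Lemma Qc_inv0 : Qcinv 0%Qc = 0%Qc. Proof. by apply: Qc_is_canon. Qed.
HB.instance Definition _ := GRing.ComNzRing_isField.Build Qc Qc_mulVf Qc_inv0.



Definition phiQ (q : Qc) : CC := ((Q2R (this q) : Rdefinitions.R)%:C)%C.

Lemma Q2R_red q : Q2R (Qred q) = Q2R q.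
Proof. apply: Qeq_eqR; exact: Qred_correct. Qed.

Lemma phiQ_zmod : zmod_morphism phiQ.
Proof.
move=> x y; rewrite /phiQ -rmorphB; congr (_%:C)%C.
transitivity (Q2R (Qred (this x + Qred (- this y)))); first by [].
rewrite Q2R_red Q2R_plus Q2R_red Q2R_opp; by [].
Qed.

Lemma phiQ_mult : multiplicative phiQ.
Proof.
split.
  move=> x y; rewrite /phiQ -rmorphM; congr (_%:C)%C.
  transitivity (Q2R (Qred (this x * this y))); first by [].
  by rewrite Q2R_red Q2R_mult.
rewrite /phiQ -[RHS](rmorph1 (real_complex Rdefinitions.R)); congr (_%:C)%C.
change (Q2R 1 = 1%R). by rewrite /Q2R /= Rinv_1 Rmult_1_l.
Qed.
HB.instance Definition _ := GRing.isZmodMorphism.Build Qc CC phiQ phiQ_zmod.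
HB.instance Definition _ := GRing.isMultiplicative.Build Qc CC phiQ phiQ_mult.

End QcPart.
Import QcPart.

Definition sdata : seq (bool * positive * positive * monom * monom) :=
  [:: (true, xI(xI(xI(xI(xI(xO(xO(xO(xI(xO(xI(xI(xH)))))))))))), xO(xO(xO(xO(xO(xO(xO(xO(xO(xO(xH)))))))))), [:: 0%N; 0%N], [:: ]);
     (true, xI(xI(xI(xI(xO(xI(xO(xI(xO(xI(xO(xI(xO(xI(xO(xI(xO(xI(xO(xI(xI(xO(xI(xO(xO(xO(xI(xI(xO(xH))))))))))))))))))))))))))))), xO(xO(xO(xO(xO(xO(xO(xO(xO(xO(xO(xI(xH)))))))))))), [:: 1%N; 0%N], [:: ]);
     (true, xI(xO(xO(xO(xO(xO(xI(xI(xI(xO(xO(xO(xI(xO(xI(xO(xI(xI(xI(xI(xO(xO(xI(xO(xI(xO(xI(xI(xO(xO(xO(xO(xH)))))))))))))))))))))))))))))))), xO(xO(xO(xO(xO(xO(xO(xO(xO(xO(xO(xO(xI(xH))))))))))))), [:: 2%N; 0%N], [:: ]);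
     (false, xI(xI(xO(xI(xI(xI(xI(xI(xI(xI(xO(xO(xO(xO(xO(xO(xI(xO(xI(xI(xI(xI(xO(xI(xO(xI(xO(xI(xO(xH))))))))))))))))))))))))))))), xO(xO(xO(xO(xO(xO(xO(xO(xO(xO(xO(xO(xO(xI(xH)))))))))))))), [:: 1%N; 1%N], [:: ]);
     (true, xI(xI(xI(xI(xI(xO(xI(xO(xO(xO(xI(xO(xI(xI(xI(xO(xI(xI(xI(xO(xH)))))))))))))))))))), xO(xO(xO(xO(xO(xO(xO(xO(xO(xO(xO(xO(xH)))))))))))), [:: 0%N; 0%N; 0%N; 0%N], [:: ]);
     (true, xI(xO(xI(xO(xI(xO(xO(xO(xO(xI(xO(xI(xI(xI(xI(xI(xI(xI(xI(xO(xO(xO(xO(xI(xO(xO(xO(xI(xI(xO(xO(xO(xI(xH))))))))))))))))))))))))))))))))), xO(xO(xO(xO(xO(xO(xO(xO(xO(xO(xO(xO(xI(xO(xH)))))))))))))), [:: 3%N; 0%N], [:: ]);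
     (false, xI(xO(xO(xI(xO(xI(xO(xO(xI(xO(xI(xI(xO(xI(xO(xI(xI(xI(xI(xI(xO(xI(xI(xI(xO(xI(xO(xI(xO(xO(xH)))))))))))))))))))))))))))))), xO(xO(xO(xO(xO(xO(xO(xO(xO(xO(xO(xO(xI(xO(xH)))))))))))))), [:: 2%N; 1%N], [:: ]);
     (true, xI(xO(xO(xO(xI(xO(xO(xI(xO(xI(xI(xO(xO(xO(xO(xI(xO(xO(xI(xI(xI(xO(xO(xO(xI(xI(xO(xI(xO(xI(xI(xO(xO(xH))))))))))))))))))))))))))))))))), xO(xO(xO(xO(xO(xO(xO(xO(xO(xO(xI(xI(xI(xH))))))))))))), [:: 4%N; 0%N], [:: ]);
     (false, xI(xI(xI(xO(xO(xO(xI(xO(xI(xO(xI(xI(xO(xO(xI(xO(xI(xO(xO(xO(xO(xI(xO(xI(xO(xI(xI(xI(xI(xI(xI(xH))))))))))))))))))))))))))))))), xO(xO(xO(xO(xO(xO(xO(xO(xO(xO(xO(xI(xI(xI(xH)))))))))))))), [:: 3%N; 1%N], [:: ]);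
     (true, xI(xO(xO(xI(xI(xO(xO(xO(xI(xI(xI(xI(xI(xO(xO(xI(xO(xO(xI(xO(xI(xI(xI(xO(xI(xI(xO(xO(xO(xO(xH)))))))))))))))))))))))))))))), xO(xO(xO(xO(xO(xO(xO(xO(xO(xO(xO(xO(xI(xI(xI(xH))))))))))))))), [:: 2%N; 2%N], [:: ]);
     (true, xI(xI(xI(xI(xI(xI(xO(xO(xO(xO(xI(xO(xI(xO(xI(xI(xO(xI(xI(xO(xI(xI(xO(xO(xI(xO(xO(xO(xH)))))))))))))))))))))))))))), xO(xO(xO(xO(xO(xO(xO(xO(xO(xO(xO(xO(xH)))))))))))), [:: 1%N; 0%N], [:: 0%N; 0%N]);
     (true, xI(xO(xO(xI(xO(xO(xI(xI(xI(xI(xO(xI(xO(xI(xO(xO(xO(xO(xI(xH))))))))))))))))))), xO(xO(xO(xO(xO(xO(xO(xH))))))), [:: 0%N; 0%N], [:: 1%N; 1%N]);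
     (true, xI(xO(xI(xO(xO(xI(xO(xI(xI(xI(xI(xO(xO(xO(xO(xH))))))))))))))), xO(xO(xO(xO(xO(xO(xO(xH))))))), [:: 0%N; 0%N], [:: 0%N; 0%N; 0%N; 0%N]);
     (false, xI(xO(xI(xI(xO(xI(xO(xO(xI(xO(xI(xI(xI(xI(xI(xO(xO(xI(xI(xO(xI(xI(xI(xO(xO(xI(xO(xH))))))))))))))))))))))))))), xO(xO(xO(xO(xO(xO(xO(xO(xO(xO(xO(xO(xH)))))))))))), [:: 1%N; 0%N; 0%N; 0%N], [:: ]);
     (true, xI(xO(xI(xI(xO(xO(xI(xO(xO(xO(xO(xO(xI(xI(xI(xI(xI(xO(xO(xI(xO(xO(xI(xO(xI(xO(xO(xO(xH)))))))))))))))))))))))))))), xO(xO(xO(xO(xO(xI(xO(xI(xO(xH))))))))), [:: 5%N; 0%N], [:: ]);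
     (false, xI(xI(xO(xO(xI(xI(xO(xO(xO(xO(xI(xI(xO(xO(xI(xO(xI(xI(xI(xO(xI(xI(xO(xI(xO(xO(xI(xO(xO(xI(xO(xO(xH)))))))))))))))))))))))))))))))), xO(xO(xO(xO(xO(xO(xO(xO(xO(xI(xO(xO(xI(xO(xI(xH))))))))))))))), [:: 4%N; 1%N], [:: ]);
     (false, xI(xO(xI(xI(xI(xO(xI(xI(xI(xI(xO(xO(xO(xO(xI(xI(xI(xI(xI(xI(xO(xI(xI(xO(xO(xO(xI(xO(xH)))))))))))))))))))))))))))), xO(xO(xO(xO(xO(xO(xO(xO(xO(xO(xO(xI(xO(xI(xO(xH))))))))))))))), [:: 3%N; 2%N], [:: ]);
     (false, xI(xO(xI(xI(xI(xO(xI(xO(xI(xO(xI(xI(xI(xO(xO(xI(xO(xI(xO(xI(xO(xI(xO(xI(xI(xH))))))))))))))))))))))))), xO(xO(xO(xO(xO(xO(xO(xO(xO(xO(xO(xH))))))))))), [:: 2%N; 0%N], [:: 0%N; 0%N]);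
     (true, xI(xI(xI(xO(xI(xO(xO(xI(xI(xO(xO(xI(xO(xO(xO(xO(xO(xO(xI(xO(xI(xO(xI(xO(xI(xI(xH)))))))))))))))))))))))))), xO(xO(xO(xO(xO(xO(xO(xO(xO(xO(xO(xO(xO(xH))))))))))))), [:: 1%N; 1%N], [:: 0%N; 0%N]);
     (true, xI(xI(xO(xI(xO(xO(xO(xO(xI(xO(xI(xO(xI(xI(xH)))))))))))))), xO(xO(xO(xO(xO(xO(xH)))))), [:: 1%N; 0%N], [:: 1%N; 1%N]);
     (false, xI(xI(xI(xI(xI(xO(xI(xO(xI(xI(xO(xI(xI(xO(xO(xO(xO(xI(xO(xO(xI(xH))))))))))))))))))))), xO(xO(xO(xO(xO(xO(xO(xO(xO(xO(xO(xH))))))))))), [:: 1%N; 0%N], [:: 0%N; 0%N; 0%N; 0%N]);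
     (true, xI(xI(xI(xI(xI(xI(xO(xI(xO(xI(xO(xO(xI(xO(xH)))))))))))))), xO(xO(xH)), [:: 0%N; 0%N], [:: 2%N; 2%N]);
     (true, xI(xI(xH)), xO(xO(xO(xO(xO(xH))))), [:: 0%N; 0%N], [:: 0%N; 0%N; 0%N; 0%N; 0%N; 0%N]);
     (true, xI(xO(xO(xI(xI(xI(xO(xO(xI(xI(xI(xO(xI(xO(xO(xO(xI(xO(xI(xI(xO(xI(xO(xO(xI(xO(xO(xI(xO(xO(xH)))))))))))))))))))))))))))))), xO(xO(xO(xO(xO(xO(xO(xO(xO(xO(xI(xI(xH)))))))))))), [:: 6%N; 0%N], [:: ]);
     (false, xI(xO(xO(xI(xO(xO(xO(xI(xO(xO(xI(xO(xO(xO(xI(xO(xO(xI(xI(xI(xO(xI(xO(xI(xI(xO(xO(xO(xO(xH))))))))))))))))))))))))))))), xO(xO(xO(xO(xO(xO(xO(xO(xO(xO(xO(xI(xI(xH))))))))))))), [:: 5%N; 1%N], [:: ]);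
     (true, xI(xI(xO(xI(xO(xI(xI(xI(xI(xI(xO(xI(xI(xI(xO(xI(xI(xO(xO(xI(xO(xO(xO(xI(xI(xO(xO(xH))))))))))))))))))))))))))), xO(xO(xO(xO(xO(xO(xO(xO(xO(xO(xI(xI(xO(xO(xO(xH))))))))))))))), [:: 4%N; 2%N], [:: ]);
     (false, xI(xO(xO(xI(xO(xO(xO(xI(xI(xO(xO(xI(xI(xI(xI(xI(xI(xO(xI(xI(xO(xI(xO(xO(xI(xO(xH)))))))))))))))))))))))))), xO(xO(xO(xO(xO(xO(xO(xO(xO(xO(xO(xI(xI(xH))))))))))))), [:: 3%N; 3%N], [:: ]);
     (true, xI(xO(xO(xI(xI(xI(xI(xI(xI(xO(xO(xI(xI(xI(xO(xO(xO(xI(xI(xO(xO(xI(xO(xI(xO(xO(xO(xH))))))))))))))))))))))))))), xO(xO(xO(xO(xO(xO(xO(xO(xO(xO(xO(xO(xH)))))))))))), [:: 0%N; 0%N], [:: 3%N; 0%N]);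
     (true, xI(xI(xO(xO(xI(xO(xI(xI(xI(xO(xO(xI(xO(xI(xO(xI(xO(xH))))))))))))))))), xO(xO(xO(xO(xH)))), [:: 0%N; 0%N], [:: 2%N; 1%N]);
     (true, xI(xO(xI(xI(xI(xI(xI(xO(xO(xO(xO(xI(xO(xO(xO(xI(xI(xI(xO(xO(xI(xO(xI(xH))))))))))))))))))))))), xO(xO(xO(xO(xO(xO(xO(xO(xO(xO(xO(xO(xH)))))))))))), [:: 0%N; 0%N], [:: 1%N; 0%N; 0%N; 0%N]);
     (false, xI(xI(xI(xO(xI(xI(xI(xO(xI(xO(xO(xI(xI(xO(xO(xO(xO(xI(xI(xI(xO(xI(xI(xH))))))))))))))))))))))), xO(xO(xO(xO(xO(xO(xO(xO(xO(xH))))))))), [:: 3%N; 0%N], [:: 0%N; 0%N]);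
     (false, xI(xO(xI(xI(xI(xO(xI(xO(xI(xI(xO(xI(xO(xO(xI(xO(xO(xI(xO(xI(xI(xO(xH)))))))))))))))))))))), xO(xO(xO(xO(xO(xO(xO(xO(xO(xO(xH)))))))))), [:: 2%N; 1%N], [:: 0%N; 0%N]);
     (true, xI(xI(xI(xO(xO(xI(xO(xO(xO(xI(xI(xO(xO(xO(xI(xO(xO(xO(xO(xI(xI(xI(xO(xO(xO(xO(xO(xH))))))))))))))))))))))))))), xO(xO(xO(xO(xO(xO(xO(xO(xO(xO(xO(xI(xO(xH))))))))))))), [:: 0%N; 0%N], [:: 4%N; 0%N]);
     (true, xI(xO(xI(xI(xO(xO(xI(xO(xI(xO(xO(xI(xI(xO(xI(xI(xI(xI(xO(xI(xO(xO(xH)))))))))))))))))))))), xO(xO(xO(xO(xO(xO(xO(xO(xO(xO(xO(xH))))))))))), [:: 0%N; 0%N], [:: 3%N; 1%N]);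
     (true, xI(xI(xI(xI(xI(xO(xO(xI(xO(xO(xO(xI(xI(xI(xI(xO(xI(xO(xI(xI(xO(xO(xH)))))))))))))))))))))), xO(xO(xO(xO(xO(xO(xO(xO(xO(xO(xO(xH))))))))))), [:: 0%N; 0%N], [:: 2%N; 0%N; 0%N; 0%N]);
     (true, xI(xO(xI(xI(xI(xO(xI(xO(xO(xI(xO(xO(xO(xO(xH)))))))))))))), xO(xO(xO(xO(xO(xO(xH)))))), [:: 0%N; 0%N], [:: 1%N; 1%N; 0%N; 0%N]);
     (true, xI(xI(xI(xI(xI(xI(xI(xI(xI(xO(xO(xO(xO(xO(xO(xH))))))))))))))), xO(xO(xO(xO(xO(xH))))), [:: 2%N; 0%N], [:: 1%N; 1%N]);
     (false, xI(xI(xO(xO(xO(xO(xO(xI(xI(xI(xH)))))))))), xO(xO(xO(xO(xO(xH))))), [:: 2%N; 0%N], [:: 0%N; 0%N; 0%N; 0%N]);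
     (false, xI(xI(xI(xI(xI(xI(xI(xO(xI(xO(xO(xO(xI(xO(xO(xO(xO(xI(xI(xI(xO(xH))))))))))))))))))))), xO(xO(xO(xO(xO(xO(xO(xO(xO(xO(xO(xO(xH)))))))))))), [:: 1%N; 1%N], [:: 0%N; 0%N; 0%N; 0%N]);
     (true, xI(xO(xO(xI(xO(xI(xO(xO(xI(xI(xO(xI(xO(xI(xI(xI(xO(xO(xI(xH))))))))))))))))))), xO(xO(xO(xO(xO(xO(xH)))))), [:: 7%N; 0%N], [:: ]);
     (true, xI(xI(xI(xO(xO(xO(xO(xI(xI(xO(xI(xI(xI(xI(xO(xO(xO(xH))))))))))))))))), xO(xO(xO(xO(xO(xO(xO(xO(xH)))))))), [:: 6%N; 1%N], [:: ]);
     (false, xI(xI(xO(xI(xI(xO(xI(xI(xI(xO(xO(xO(xI(xI(xO(xO(xO(xO(xI(xH))))))))))))))))))), xO(xO(xO(xO(xO(xO(xO(xO(xO(xH))))))))), [:: 5%N; 2%N], [:: ]);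
     (false, xI(xO(xI(xI(xO(xO(xI(xO(xO(xI(xI(xO(xO(xO(xO(xO(xO(xO(xO(xO(xH)))))))))))))))))))), xO(xO(xO(xO(xO(xO(xO(xO(xO(xO(xH)))))))))), [:: 4%N; 3%N], [:: ]);
     (true, xI(xI(xO(xI(xO(xI(xI(xI(xO(xH))))))))), xO(xH), [:: 1%N; 0%N], [:: 2%N; 2%N]);
     (true, xI(xH), xO(xO(xO(xH))), [:: 1%N; 0%N], [:: 0%N; 0%N; 0%N; 0%N; 0%N; 0%N]);
     (true, xI(xO(xO(xO(xI(xI(xI(xO(xI(xO(xO(xI(xI(xI(xI(xI(xH)))))))))))))))), xO(xO(xO(xO(xO(xO(xH)))))), [:: 0%N; 0%N], [:: 5%N; 0%N]);
     (true, xI(xO(xI(xI(xI(xI(xO(xO(xI(xO(xO(xI(xI(xI(xO(xO(xI(xI(xO(xH))))))))))))))))))), xO(xO(xO(xO(xO(xO(xO(xO(xO(xO(xH)))))))))), [:: 0%N; 0%N], [:: 4%N; 1%N]);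
     (true, xI(xI(xO(xO(xO(xO(xO(xI(xO(xO(xI(xO(xO(xI(xI(xI(xI(xI(xI(xI(xH)))))))))))))))))))), xO(xO(xO(xO(xO(xO(xO(xO(xO(xO(xO(xH))))))))))), [:: 0%N; 0%N], [:: 3%N; 2%N]);
     (true, xI(xI(xI(xO(xI(xO(xO(xO(xH)))))))), xH, [:: 0%N; 0%N], [:: 3%N; 0%N; 0%N; 0%N]);
     (false, xI(xI(xO(xO(xI(xI(xI(xO(xI(xO(xO(xO(xH)))))))))))), xO(xO(xO(xO(xO(xO(xO(xH))))))), [:: 0%N; 0%N], [:: 1%N; 1%N; 1%N; 0%N]);
     (false, xI(xO(xO(xH))), xO(xO(xO(xO(xO(xH))))), [:: 0%N; 0%N], [:: 1%N; 0%N; 0%N; 0%N; 0%N; 0%N]);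
     (false, xI(xO(xO(xI(xO(xI(xO(xO(xO(xO(xO(xI(xI(xO(xO(xO(xO(xO(xO(xI(xO(xI(xI(xO(xO(xO(xH)))))))))))))))))))))))))), xO(xO(xO(xO(xO(xO(xO(xO(xO(xO(xI(xO(xH)))))))))))), [:: 4%N; 0%N], [:: 0%N; 0%N]);
     (false, xI(xO(xI(xI(xI(xO(xO(xO(xO(xO(xI(xI(xI(xI(xO(xI(xI(xI(xO(xH))))))))))))))))))), xO(xO(xO(xO(xO(xO(xO(xO(xO(xO(xO(xH))))))))))), [:: 3%N; 0%N], [:: 1%N; 1%N]);
     (true, xI(xO(xO(xO(xO(xO(xO(xO(xO(xH))))))))), xO(xO(xO(xO(xO(xH))))), [:: 3%N; 0%N], [:: 0%N; 0%N; 0%N; 0%N]);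
     (false, xI(xI(xI(xO(xI(xO(xI(xO(xI(xH))))))))), xO(xO(xO(xH))), [:: 2%N; 1%N], [:: 1%N; 1%N]);
     (false, xI(xO(xI(xI(xI(xI(xI(xO(xI(xO(xI(xH))))))))))), xO(xO(xO(xO(xO(xH))))), [:: 2%N; 1%N], [:: 0%N; 0%N; 0%N; 0%N]);
     (true, xI(xO(xO(xO(xO(xI(xI(xO(xI(xI(xI(xO(xO(xI(xO(xH))))))))))))))), xO(xO(xO(xO(xO(xH))))), [:: 1%N; 0%N], [:: 4%N; 0%N]);
     (true, xI(xO(xI(xI(xI(xI(xI(xO(xI(xI(xO(xO(xI(xI(xO(xI(xO(xO(xI(xO(xH)))))))))))))))))))), xO(xO(xO(xO(xO(xO(xO(xO(xO(xO(xO(xH))))))))))), [:: 1%N; 0%N], [:: 3%N; 1%N]);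
     (true, xI(xO(xI(xO(xO(xI(xO(xI(xO(xO(xO(xI(xH)))))))))))), xO(xO(xO(xO(xO(xH))))), [:: 1%N; 0%N], [:: 2%N; 0%N; 0%N; 0%N]);
     (true, xI(xI(xO(xO(xI(xI(xI(xI(xI(xO(xI(xO(xH)))))))))))), xO(xO(xO(xO(xO(xO(xH)))))), [:: 1%N; 0%N], [:: 1%N; 1%N; 0%N; 0%N]);
     (false, xI(xO(xI(xI(xI(xI(xO(xO(xO(xO(xO(xI(xI(xO(xO(xH))))))))))))))), xO(xO(xO(xO(xO(xH))))), [:: 5%N; 0%N], [:: 0%N; 0%N])].


Local Open Scope ring_scope.

Definition sF (K : fieldType) : seq (vec K * vec K) :=
  [seq let: (sg, a, b, u, v) := d in ([:: (q2F K sg a b, u)], [:: (1, v)]) | d <- sdata].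

Definition Fq : fieldType := Stdlib.QArith.Qcanon.Qc.
Definition bq : vec Fq := zstar2 (zstar2 (vsub (omega Fq) (vac Fq))
   (vsub (omega Fq) (vscale (1 / 16%:R) (vac Fq)))) (vsub (omega Fq) (vscale (9%:R / 16%:R) (vac Fq))).
Definition dq : vec Fq := vadd (vadd (Jvec Fq) (omega Fq)) (vscale (- 4%:R) (zstar2 (omega Fq) (omega Fq))).
Definition xq : vec Fq := zstar2 (nfs bq) (nfs dq).
Definition sigq : vec Fq := vsum [seq zcirc2 p.1 p.2 | p <- sF Fq].

Lemma check_ok : allzero (nf (vsub xq sigq)).
Proof. by vm_compute. Qed.

Lemma sdata_even : all (fun d : bool * positive * positive * monom * monom =>
   ~~ odd (size d.1.2) && ~~ odd (size d.2)) sdata.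
Proof. by vm_compute. Qed.

Lemma veq_trans (K : fieldType) (a b c : vec K) : veq a b -> veq b c -> veq a c.
Proof. by move=> H1 H2 mu; rewrite H1 H2. Qed.

Lemma sF_in (K : fieldType) (l : seq (bool * positive * positive * monom * monom)) (p : vec K * vec K) :
  all (fun d : bool * positive * positive * monom * monom =>
   ~~ odd (size d.1.2) && ~~ odd (size d.2)) l ->
  p \in [seq let: (sg, a, b, u, v) := d in ([:: (q2F K sg a b, u)], [:: (1, v)]) | d <- l] ->
  [/\ homog p.1, in_plus p.1 & in_plus p.2].
Proof.
elim: l => [|[[[[sg a] b] u] v] l IH] //= /andP [/andP [Hu Hv] Hl].
rewrite inE => /orP [/eqP -> | /(IH Hl) //].
split => /=.
- by exists (wtm u) => q; rewrite inE => /eqP ->.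
- by move=> q; rewrite inE => /eqP ->.
- by move=> q; rewrite inE => /eqP ->.
Qed.

Theorem proposition4p2 :
  let w := omega CC in
  let one := vac CC in
  inO_plus
    (zstar
      (zstar
        (zstar (vsub w one) (vsub w (vscale (1 / 16%:R) one)))
        (vsub w (vscale (9%:R / 16%:R) one)))
      (vadd (vadd (Jvec CC) w) (vscale (- 4%:R) (zstar w w)))).
Proof.
move=> w one; exists (sF CC); split.
  move=> p; exact: sF_in sdata_even.
have EX : mapv phiQ (zstar2 bq dq) =
   zstar2 (zstar2 (zstar2 (vsub w one) (vsub w (vscale (1 / 16%:R) one)))
        (vsub w (vscale (9%:R / 16%:R) one)))
      (vadd (vadd (Jvec CC) w) (vscale (- 4%:R) (zstar2 w w))).
  have c1 : phiQ (1 / 16%:R) = 1 / 16%:R by rewrite fmorph_div rmorph1 rmorph_nat.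
  have c2 : phiQ (9%:R / 16%:R) = 9%:R / 16%:R by rewrite fmorph_div !rmorph_nat.
  have c3 : phiQ (- 4%:R) = - 4%:R by rewrite rmorphN rmorph_nat.
  rewrite /bq /dq !(mapv_zstar2, mapv_vsub, mapv_vadd, mapv_vscale, mapv_omega, mapv_vac, mapv_Jvec).
  by rewrite /w /one -c1 -c2 -c3.
have ES : mapv phiQ sigq = vsum [seq zcirc2 p.1 p.2 | p <- sF CC].
  rewrite /sigq mapv_vsum /sF -!map_comp; congr flatten; apply: eq_map => -[[[[sg a] b] u] v] /=.
  by rewrite mapv_zcirc2 /mapv /= f_q2F rmorph1.
rewrite !zstarE.
have -> : [seq zcirc p.1 p.2 | p <- sF CC] = [seq zcirc2 p.1 p.2 | p <- sF CC].
  by apply: eq_map => p; rewrite zcircE.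
rewrite -EX -ES; apply: veq_mapv.
apply: (@veq_trans _ _ xq); last exact: allzero_veq check_ok.
apply: wequiv_veq => g; rewrite /xq; symmetry.
by apply: zstar2_wequiv; apply: wequiv_nfs.
Qed.
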